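(* The parameterized problems \textsc{Tree Deletion Set}[vc] and \textsc{Tree Deletion Set}[tds] do not admit a boundaried kernelization (of any computable size $f$). More specifically, for a single-vertex boundary $B=\{x\}$, the relation $\equiv_{\textsc{TDS},B}$ has infinitely many equivalence classes both when restricted to $B$-boundaried graphs $G_B$ with $G-B$ edgeless and when restricted to $B$-boundaried graphs $G_B$ with $G-B$ a tree.
   Context: A boundaried graph $G_B$ is a finite simple graph $G$ together with a set $B\subseteq V(G)$ (the boundary). For boundaried graphs $G_B$ and $H_C$ with $V(G)\cap V(H)\subseteq B\cap C$, the gluing $G_B\oplus H_C$ is the simple graph obtained from the disjoint union of $G$ and $H$ by identifying each vertex of $B\cap C$ in $G$ with the identically named vertex in $H$ (an edge present in both is kept once). For an isomorphism-invariant optimization problem $\Pi$ on graphs with optimum value $\mathrm{OPT}_\Pi(G)$, two $B$-boundaried graphs $G_B,G'_B$ are gluing equivalent w.r.t. $\Pi$ and $B$, written $G_B\equiv_{\Pi,B}G'_B$, if there is $\Delta\in\mathbb{Z}$ with $\mathrm{OPT}_\Pi(G_B\oplus H_B)=\mathrm{OPT}_\Pi(G'_B\oplus H_B)+\Delta$ for every boundaried graph $H_B$. For a pure graph minimization problem $\rho$, a $\rho$-solution of $G$ is a feasible solution $s$ with value $\rho(G,s)$. For computable $f$, a boundaried kernelization of size $f$ for $\Pi[\rho]$ is a polynomial-time algorithm that, given a boundaried graph $G_B$ and a $\rho$-solution $s$ of $G$, outputs a boundaried graph $G'_B$ with $G_B\equiv_{\Pi,B}G'_B$, a $\rho$-solution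 $s'$ of $G'$ with $|G'|,|s'|,\rho(G',s')\le f(|B|+\rho(G,s))$ (encoding sizes), and an integer $\Delta$ with $\mathrm{OPT}_\Pi(G_B\oplus H_B)=\mathrm{OPT}_\Pi(G'_B\oplus H_B)+\Delta$ for all $H_B$. \textsc{Tree Deletion Set} (tds, TDS) is the minimization problem whose feasible solutions on $G$ are sets $S\subseteq V(G)$ such that $G-S$ is a tree, with value $|S|$. \textsc{Vertex Cover} (vc) is the minimization problem with feasible solutions $S\subseteq V(G)$ such that $G-S$ is edgeless, value $|S|$. $\Pi$[vc], $\Pi$[tds] denote $\rho=$ \textsc{Vertex Cover}, resp. $\rho=$ \textsc{Tree Deletion Set}. *)

(* Defs.v *)
From mathcomp Require Import all_boot all_order all_algebra.
From mathcomp Require Import finmap.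
From Stdlib Require Import Relation_Operators.

Set Implicit Arguments.
Unset Strict Implicit.
Unset Printing Implicit Defensive.

Local Open Scope fset_scope.

Record graph (T : choiceType) := Graph { gV : {fset T}; gE : {fset {fset T}} }.

Definition wf_graph (T : choiceType) (G : graph T) : Prop :=
  forall e, e \in gE G -> (e `<=` gV G) /\ #|` e| = 2.

Definition adj (T : choiceType) (G : graph T) : rel T :=
  fun u v => [fset u; v] \in gE G.

Definition del (T : choiceType) (G : graph T) (S : {fset T}) : graph T :=
  Graph (gV G `\` S) [fset e in gE G | e `&` S == fset0].

Definition connected (T : choiceType) (G : graph T) : Prop :=
  forall u v, u \in gV G -> v \in gV G -> clos_refl_trans T (fun a b => adj G a b) u v.

Definition acyclic (T : choiceType) (G : graph T) : Prop :=
  forall s : seq T, uniq s -> 3 <= size s -> ~~ cycle (adj G) s.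

Definition is_tree (T : choiceType) (G : graph T) : Prop :=
  gV G != fset0 /\ connected G /\ acyclic G.

Definition edgeless (T : choiceType) (G : graph T) : Prop := gE G = fset0.

Definition tds_feasible (T : choiceType) (G : graph T) (S : {fset T}) : Prop :=
  S `<=` gV G /\ is_tree (del G S).

Definition vc_feasible (T : choiceType) (G : graph T) (S : {fset T}) : Prop :=
  S `<=` gV G /\ edgeless (del G S).

(* k is the optimum value OPT_TDS(G) (undefined when no feasible solution). *)
Definition is_opt_tds (T : choiceType) (G : graph T) (k : nat) : Prop :=
  (exists S, tds_feasible G S /\ #|` S| = k) /\
  (forall S, tds_feasible G S -> k <= #|` S|).

Record bgraph := BGraph { bG : graph nat; bB : {fset nat} }.

Definition wf_bgraph (G : bgraph) : Prop :=
  wf_graph (bG G) /\ bB G `<=` gV (bG G).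

(* Gluing G_B (+) H_C: disjoint union of G and H in which exactly the vertices
   of B :&: C are identified (by name).  Shared vertices are tagged [inl v];
   the other vertices of G are [inr (false, v)], those of H [inr (true, v)]. *)
Definition glue_tag (BC : {fset nat}) (side : bool) (v : nat) : nat + (bool * nat) :=
  if v \in BC then inl v else inr (side, v).

Definition glue_side (BC : {fset nat}) (side : bool) (G : graph nat)
  : graph (nat + (bool * nat))%type :=
  Graph [fset glue_tag BC side v | v in gV G]
        [fset [fset glue_tag BC side v | v in (e : {fset nat})] | e in gE G].

Definition glue (G H : bgraph) : graph (nat + (bool * nat))%type :=
  let BC := bB G `&` bB H in
  Graph (gV (glue_side BC false (bG G)) `|` gV (glue_side BC true (bG H)))
        (gE (glue_side BC false (bG G)) `|` gE (glue_side BC true (bG H))).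

(* OPT(G (+) H) = OPT(G' (+) H) + D  (as partial values: both undefined, or
   both defined and related by D). *)
Definition opt_shift (G G' H : bgraph) (D : int) : Prop :=
  (forall k, is_opt_tds (glue G H) k ->
     exists k', is_opt_tds (glue G' H) k' /\ (k%:Z = k'%:Z + D)%R) /\
  (forall k', is_opt_tds (glue G' H) k' ->
     exists k, is_opt_tds (glue G H) k /\ (k%:Z = k'%:Z + D)%R).

Definition glue_equiv (B : {fset nat}) (G G' : bgraph) : Prop :=
  bB G = B /\ bB G' = B /\
  exists D : int, forall H, wf_bgraph H -> bB H = B -> opt_shift G G' H D.

(* Boundaried kernelization of size f for TDS[rho] (rho given by its feasibility
   predicate; the value of a solution is its cardinality), as an arbitrary
   function (no running-time requirement). *)
Definition bkernel (rho : graph nat -> {fset nat} -> Prop) (f : nat -> nat)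
  (K : bgraph -> {fset nat} -> bgraph * {fset nat} * int) : Prop :=
  forall G s, wf_bgraph G -> rho (bG G) s ->
    let: (G', s', D) := K G s in
    wf_bgraph G' /\ bB G' = bB G /\ rho (bG G') s' /\
    glue_equiv (bB G) G G' /\
    (#|` gV (bG G')| + #|` gE (bG G')|)%N <= f (#|` bB G| + #|` s|)%N /\
    #|` s'| <= f (#|` bB G| + #|` s|)%N /\
    (forall H, wf_bgraph H -> bB H = bB G -> opt_shift G G' H D).

Definition infinitely_many_classes (B : {fset nat}) (P : bgraph -> Prop) : Prop :=
  exists Gs : nat -> bgraph,
    (forall i, wf_bgraph (Gs i) /\ bB (Gs i) = B /\ P (Gs i)) /\
    (forall i j, i <> j -> ~ glue_equiv B (Gs i) (Gs j)).

(* Main.v *)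
Require Import Defs.
From mathcomp Require Import all_boot all_order all_algebra.
From mathcomp Require Import finmap zify.
From Stdlib Require Import Relation_Operators.
Set Implicit Arguments. Unset Strict Implicit. Unset Printing Implicit Defensive.
Local Open Scope fset_scope.

Definition star_like (T : choiceType) (G : graph T) (c : T) : Prop :=
  c \in gV G /\ (forall v, v \in gV G -> v != c -> adj G c v) /\
  (forall e, e \in gE G -> c \in e).

Lemma adj_sym (T : choiceType) (G : graph T) u v : adj G u v -> adj G v u.
Proof. by rewrite /adj fsetUC. Qed.

Lemma star_adj (T : choiceType) (G : graph T) c u v :
  star_like G c -> adj G u v -> u = c \/ v = c.
Proof.
move=> [_ [_ He]] /He /fset2P [->|->]; by [left|right].
Qed.

Lemma star_tree (T : choiceType) (G : graph T) c : star_like G c -> is_tree G.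
Proof.
move=> St; have [Hc [Hv He]] := St; split; [|split].
- by apply/eqP => E; move: Hc; rewrite E inE.
- move=> u v Hu Hv'.
  have Huc : clos_refl_trans T (fun a b => adj G a b) u c.
    case: (eqVneq u c) => [->|ne]; first by apply: rt_refl.
    by apply: rt_step; apply: adj_sym; apply: Hv.
  have Hcv : clos_refl_trans T (fun a b => adj G a b) c v.
    case: (eqVneq v c) => [->|ne]; first by apply: rt_refl.
    by apply: rt_step; apply: Hv.
  exact: rt_trans Huc Hcv.
- case=> [|a [|b [|d t]]] //= Hu Hs.
  apply/negP; rewrite /cycle /= rcons_path /=.
  move=> /and4P [Hab Hbd _ Hl].
  move: Hu => /and4P [Ha Hbn _ _].
  have nab : a != b by apply: contraNneq Ha => ->; rewrite inE eqxx.
  have nad : a != d by apply: contraNneq Ha => ->; rewrite !inE eqxx orbT.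
  have Hb : b = c.
    have [E1|E1] := star_adj St Hab; last by [].
    have [E2|E2] := star_adj St Hbd; first by [].
    by move: nad; rewrite E1 E2 eqxx.
  have [E|E] := star_adj St Hl.
  + by move: Hbn; rewrite Hb -E mem_last.
  + by move: nab; rewrite Hb E eqxx.
Qed.

Lemma star_del (T : choiceType) (G : graph T) c S :
  star_like G c -> c \notin S -> star_like (del G S) c.
Proof.
move=> [Hc [Hv He]] cS; split; [|split] => /=.
- by rewrite inE cS.
- move=> v; rewrite inE => /andP [vS vV] vc.
  rewrite /adj /= inE; apply/andP; split; first exact: Hv.
  apply/eqP/fsetP => z; rewrite !inE.
  by apply/negbTE; apply/negP => /andP [/orP [/eqP ->|/eqP ->]] /[!(negbTE cS, negbTE vS)].
- move=> e; rewrite inE => /andP [eE _]; exact: He.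
Qed.

Lemma tag_inj BC s : injective (glue_tag BC s).
Proof.
move=> v w; rewrite /glue_tag.
by case: (v \in BC); case: (w \in BC) => // [[]] // [].
Qed.

Lemma tag_x x s : glue_tag [fset x] s x = inl x.
Proof. by rewrite /glue_tag fset11. Qed.

Lemma tag_nx x s v : v != x -> glue_tag [fset x] s v = inr (s, v).
Proof. by move=> nv; rewrite /glue_tag inE (negbTE nv). Qed.

Lemma tag_FT x v w : glue_tag [fset x] false v = glue_tag [fset x] true w -> v = x /\ w = x.
Proof.
rewrite /glue_tag !inE.
by case: (eqVneq v x); case: (eqVneq w x) => // -> -> // [] ->.
Qed.

Definition H1 (x : nat) : bgraph := BGraph (Graph [fset x] fset0) [fset x].

Lemma wf_H1 x : wf_bgraph (H1 x).
Proof. by split => //= e; rewrite inE. Qed.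

Lemma glue_H1_star G c x : bB G = [fset x] -> x \in gV (bG G) ->
  star_like (bG G) c -> star_like (glue G (H1 x)) (glue_tag [fset x] false c).
Proof.
move=> HB Hx [Hc [Hv He]]; rewrite /glue HB /= fsetIid; split; [|split] => /=.
- by rewrite inE in_imfset.
- move=> v; rewrite inE => /orP [] /imfsetP [w /= Hw ->].
  + move=> nwc; rewrite /adj /= -imfset_fset2 inE; apply/orP; left.
    apply: in_imfset => /=; apply: Hv => //.
    by apply: contraNneq nwc => ->.
  + move: Hw; rewrite inE => /eqP ->; rewrite (tag_x x true) -(tag_x x false) => nwc.
    rewrite /adj /= -imfset_fset2 inE; apply/orP; left.
    apply: in_imfset => /=; apply: Hv => //.
    by apply: contraNneq nwc => ->.
- move=> e; rewrite inE => /orP [] /imfsetP [e0 /= He0 ->].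
  + by apply: in_imfset; apply: He.
  + by move: He0; rewrite inE.
Qed.

Lemma card_tag BC s (A : {fset nat}) :
  #|` [fset glue_tag BC s v | v in A]| = #|` A|.
Proof. by apply/eqP/card_in_imfsetP => a b _ _; apply: tag_inj. Qed.

Lemma glue_eq x G H : bB G = [fset x] -> bB H = [fset x] ->
  glue G H = Graph
    ([fset glue_tag [fset x] false v | v in gV (bG G)] `|`
     [fset glue_tag [fset x] true v | v in gV (bG H)])
    ([fset [fset glue_tag [fset x] false v | v in (e : {fset nat})] | e in gE (bG G)] `|`
     [fset [fset glue_tag [fset x] true v | v in (e : {fset nat})] | e in gE (bG H)]).
Proof. by move=> HG HH; rewrite /glue HG HH fsetIid. Qed.

Definition Qs (v : nat + (bool * nat)) : bool := if v is inr (b, _) then b else false.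

Lemma Qs_F BC w : Qs (glue_tag BC false w) = false.
Proof. by rewrite /glue_tag; case: ifP. Qed.

Lemma glue_lb x G H S : bB G = [fset x] -> bB H = [fset x] ->
  (forall e, e \in gE (bG H) -> x \notin e) ->
  tds_feasible (glue G H) S ->
  #|` gV (bG G)| <= #|` S| \/ #|` gV (bG H) `\ x| <= #|` S|.
Proof.
move=> HG HH Hex [SV [Hne [Hcon _]]].
move: SV Hne Hcon; rewrite (glue_eq HG HH) => SV Hne Hcon.
set Gl := Graph _ _ in SV Hne Hcon.
have Hinv : forall a b, clos_refl_trans _ (fun a b => adj (del Gl S) a b) a b -> Qs a = Qs b.
  move=> a b; elim => [u v Huv| u | u v w _ E1 _ E2]; [|by []| by rewrite E1 E2].
  move: Huv; rewrite /adj /= inE => /andP [].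
  have Ha : u \in [fset u; v] by rewrite !inE eqxx.
  have Hb : v \in [fset u; v] by rewrite !inE eqxx orbT.
  move: Ha Hb; move: [fset u; v] => e Ha Hb.
  rewrite inE => /orP [] /imfsetP [e0 /= He0 Ee]; subst e.
  + move: Ha Hb => /imfsetP [w1 _ ->] /imfsetP [w2 _ ->]; by rewrite !Qs_F.
  + move: Ha Hb => /imfsetP [w1 /= H1 ->] /imfsetP [w2 /= H2 ->].
    have n1 : w1 != x by apply: contraNneq (Hex _ He0) => <-.
    have n2 : w2 != x by apply: contraNneq (Hex _ He0) => <-.
    by rewrite !tag_nx.
case: (boolP ([fset glue_tag [fset x] false v | v in gV (bG G)] `<=` S)) => sub.
  by left; rewrite -(card_tag [fset x] false); apply: fsubset_leq_card.
right; move/fsubsetPn: sub => [u /imfsetP [w /= Hw Eu] uS].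
rewrite -(card_tag [fset x] true); apply: fsubset_leq_card.
apply/fsubsetP => v /imfsetP [w' /=]; rewrite !inE => /andP [nw' Hw'] Ev.
apply/negPn/negP => vS.
have Hu : u \in gV (del Gl S) by rewrite /= !inE uS /= Eu in_imfset.
have Hv : v \in gV (del Gl S).
  by rewrite /= !inE vS /= Ev [X in _ || X]in_imfset ?orbT.
have := Hinv _ _ (Hcon _ _ Hu Hv).
by rewrite Eu Ev Qs_F (tag_nx true nw').
Qed.

Definition leaves (a n : nat) : {fset nat} := locked [fset k in iota a n].

Lemma leavesP a n k : (k \in leaves a n) = (a <= k < a + n).
Proof. by rewrite /leaves -lock in_fset /= mem_iota. Qed.

Lemma card_leaves a n : #|` leaves a n| = n.
Proof. by rewrite /leaves -lock card_fseq undup_id ?iota_uniq // size_iota. Qed.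

Definition H2 (x m : nat) : bgraph :=
  BGraph (Graph (x |` (x.+1 |` leaves x.+2 m))
                [fset [fset x.+1; l] | l in leaves x.+2 m]) [fset x].

Lemma H2_noedge x m e : e \in gE (bG (H2 x m)) -> x \notin e.
Proof.
move=> /imfsetP [l /=]; rewrite leavesP => /andP [Hl _] ->.
rewrite !inE negb_or; apply/andP; split; apply/eqP => E; lia.
Qed.

Lemma wf_H2 x m : wf_bgraph (H2 x m).
Proof.
split => /=; last by rewrite fsub1set !inE eqxx.
move=> e /imfsetP [l /=]; rewrite leavesP => /andP [Hl Hl2] ->; split.
  apply/fsubsetP => z; rewrite !inE => /orP [] /eqP ->; first by rewrite eqxx orbT.
  apply/orP; right; apply/orP; right; rewrite leavesP; lia.
rewrite cardfsU1 cardfs1 inE; case: eqP => // E; lia.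
Qed.

Lemma card_H2 x m : #|` gV (bG (H2 x m)) `\ x| = m.+1.
Proof.
rewrite /= fsetDUl fsetDv fset0U.
have -> : (x.+1 |` leaves x.+2 m) `\ x = x.+1 |` leaves x.+2 m.
  apply/fsetP => z; rewrite !inE leavesP; case: eqVneq => [->|]; last by [].
  by rewrite (ltn_eqF (ltnSn x)) ltnNge leqnSn.
by rewrite (@cardfsU1 nat) leavesP ltnn card_leaves.
Qed.

Lemma glue_ub x m G : wf_bgraph G -> bB G = [fset x] ->
  tds_feasible (glue G (H2 x m)) [fset glue_tag [fset x] false v | v in gV (bG G)].
Proof.
move=> [WE WB] HG; rewrite (@glue_eq x G (H2 x m) HG (erefl _)).
set tF := glue_tag [fset x] false; set tT := glue_tag [fset x] true.
set S := [fset tF v | v in gV (bG G)].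
have Hx : x \in gV (bG G) by move: WB; rewrite HG fsub1set.
have nxx : x.+1 != x by rewrite gtn_eqF.
have HtT : forall w, w != x -> tT w \notin S.
  move=> w nw; apply/negP => /imfsetP [w' _ E].
  by have [_ E2] := tag_FT (esym E); move: nw; rewrite E2 eqxx.
split; first by apply: fsubsetUl.
apply: (@star_tree _ _ (tT x.+1)); split; [|split] => /=.
- rewrite !inE HtT //=; apply/orP; right; apply: in_imfset; by rewrite /= !inE eqxx orbT.
- move=> v; rewrite !inE => /andP [vS /orP []]; first by move=> Hv; move: vS; rewrite Hv.
  move=> /imfsetP [w /=]; rewrite !inE => /orP [/eqP Ew|/orP [/eqP Ew|Hw]] Ev.
  + by move: vS; rewrite Ev Ew /tT tag_x -(tag_x x false) in_imfset.
  + by rewrite Ev Ew eqxx.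
  + move=> _; rewrite /adj /= inE; apply/andP; split.
      rewrite inE; apply/orP; right; rewrite Ev /tT -imfset_fset2; apply: in_imfset; apply: in_imfset => //.
    apply/eqP/fsetP => z; rewrite !inE; apply/negbTE; apply/negP => /andP [/orP [] /eqP -> ]; first by rewrite (negbTE (HtT _ nxx)).
    by rewrite (negbTE vS).
- move=> e; rewrite !inE => /andP [/orP [] /imfsetP [e0 /= He0 Ee] Hdisj].
  + exfalso; have [Hsub Hc] := WE _ He0.
    have : #|` e0| != 0 by rewrite Hc.
    rewrite cardfs_eq0 => /fset0Pn [w Hw].
    move: Hdisj => /eqP /fsetP /(_ (tF w)); rewrite !inE Ee in_imfset //=.
    by rewrite in_imfset //= (fsubsetP Hsub).
  + move: He0 => /imfsetP [l /= Hl ->] in Ee; rewrite Ee imfset_fset2 !inE eqxx //.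
Qed.

Definition star_g (c : nat) (L : {fset nat}) : graph nat :=
  Graph (c |` L) [fset [fset c; l] | l in L].

Lemma star_g_like c L : star_like (star_g c L) c.
Proof.
split; [|split] => /=.
- by rewrite !inE eqxx.
- move=> v; rewrite !inE => /orP [/eqP ->|Hv]; first by rewrite eqxx.
  by move=> _; rewrite /adj /=; apply/imfsetP; exists v.
- by move=> e /imfsetP [l _ ->]; rewrite !inE eqxx.
Qed.

Lemma wf_star c L : c \notin L -> wf_graph (star_g c L).
Proof.
move=> cL e /imfsetP [l /= Hl ->]; split.
  apply/fsubsetP => z; rewrite !inE => /orP [] /eqP ->; first by rewrite eqxx.
  by rewrite Hl orbT.
rewrite (@cardfsU1 nat) cardfs1 inE; case: eqVneq => // E.
by move: cL; rewrite E Hl.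
Qed.

Lemma star_edgeless c L : edgeless (del (star_g c L) [fset c]).
Proof.
rewrite /edgeless /=; apply/fsetP => e; rewrite [e \in fset0]inE; apply/negbTE; rewrite inE; apply/negP.
move=> /andP [He /eqP /fsetP /(_ c)]; rewrite !inE eqxx.
have [_ [_ Hc]] := star_g_like c L.
by rewrite (Hc _ He).
Qed.

Definition GE (x n : nat) : bgraph := BGraph (star_g x (leaves x.+1 n)) [fset x].
Definition GT (x n : nat) : bgraph := BGraph (star_g x.+1 (x |` leaves x.+2 n)) [fset x].

Lemma wf_GE x n : wf_bgraph (GE x n).
Proof.
split; last by rewrite /= fsub1set !inE eqxx.
by apply: wf_star; rewrite leavesP ltnn.
Qed.

Lemma wf_GT x n : wf_bgraph (GT x n).
Proof.
split; last by rewrite /= fsub1set !inE eqxx orbT.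
apply: wf_star; rewrite !inE leavesP negb_or; apply/andP; split; [apply/eqP|]; lia.
Qed.

Lemma card_GE x n : #|` gV (bG (GE x n))| = n.+1.
Proof. by rewrite /= (@cardfsU1 nat) leavesP ltnn card_leaves. Qed.

Lemma card_GT x n : #|` gV (bG (GT x n))| = n.+2.
Proof.
rewrite /= (@cardfsU1 nat) (@cardfsU1 nat) card_leaves !inE !leavesP.
have -> : (x.+1 == x) = false by apply/eqP; lia.
have -> : (x.+2 <= x.+1 < x.+2 + n) = false by apply/negbTE; apply/negP; lia.
have -> : (x.+2 <= x < x.+2 + n) = false by apply/negbTE; apply/negP; lia.
by [].
Qed.

Lemma opt_uniq (T : choiceType) (G : graph T) k k' :
  is_opt_tds G k -> is_opt_tds G k' -> k = k'.
Proof.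
move=> [[S [HS <-]] H1] [[S' [HS' <-]] H2].
by apply/eqP; rewrite eqn_leq H1 // H2.
Qed.

Lemma opt_H1 G c x : wf_bgraph G -> bB G = [fset x] -> star_like (bG G) c ->
  is_opt_tds (glue G (H1 x)) 0.
Proof.
move=> [_ WB] HG Hs; split => // ; exists fset0; split => //; split; first exact: fsub0set.
apply: (star_tree (c := glue_tag [fset x] false c)); apply: star_del; last by rewrite inE.
by apply: glue_H1_star => //; move: WB; rewrite HG fsub1set.
Qed.

Lemma opt_H2 G x m : wf_bgraph G -> bB G = [fset x] -> #|` gV (bG G)| <= m.+1 ->
  is_opt_tds (glue G (H2 x m)) #|` gV (bG G)|.
Proof.
move=> WG HG Hm; split.
  by exists [fset glue_tag [fset x] false v | v in gV (bG G)]; split; [apply: glue_ub | apply: card_tag].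
move=> S HS; have [] := glue_lb HG (erefl (bB (H2 x m))) (@H2_noedge x m) HS => //.
by rewrite card_H2; apply: leq_trans.
Qed.

Lemma ub_H2 G x m k : wf_bgraph G -> bB G = [fset x] ->
  is_opt_tds (glue G (H2 x m)) k -> k <= #|` gV (bG G)|.
Proof.
move=> WG HG [_ Hk]; rewrite -(card_tag [fset x] false); apply: Hk.
exact: glue_ub.
Qed.

Lemma ineq x G1 G2 c1 c2 : wf_bgraph G1 -> wf_bgraph G2 ->
  bB G1 = [fset x] -> bB G2 = [fset x] ->
  star_like (bG G1) c1 -> star_like (bG G2) c2 ->
  #|` gV (bG G1)| <> #|` gV (bG G2)| -> ~ glue_equiv [fset x] G1 G2.
Proof.
move=> W1 W2 B1 B2 S1 S2 Hne [_ [_ [D HD]]].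
have [A _] := HD (H1 x) (wf_H1 x) erefl.
have [k1 [Hk1 E1]] := A 0 (opt_H1 W1 B1 S1).
rewrite (opt_uniq Hk1 (opt_H1 W2 B2 S2)) in E1.
set m := (#|` gV (bG G1)| + #|` gV (bG G2)|)%N.
have [B _] := HD (H2 x m) (wf_H2 x m) erefl.
have Hm1 : #|` gV (bG G1)| <= m.+1 by rewrite /m; lia.
have Hm2 : #|` gV (bG G2)| <= m.+1 by rewrite /m; lia.
have [k2 [Hk2 E2]] := B _ (opt_H2 W1 B1 Hm1).
rewrite (opt_uniq Hk2 (opt_H2 W2 B2 Hm2)) in E2.
by apply: Hne; lia.
Qed.

Lemma kernel_contra rho f K s :
  (forall n, rho (bG (GE 0 n)) s) -> ~ bkernel rho f K.
Proof.
move=> Hr HK.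
set n := f (1 + #|` s|)%N.
have := HK (GE 0 n) s (wf_GE 0 n) (Hr n).
case: (K (GE 0 n) s) => [[G' s'] D] /=.
move=> [wG' [bG' [_ [_ [Hsz [_ Hsh]]]]]].
have [A _] := Hsh (H1 0) (wf_H1 0) erefl.
have [k1 [Hk1 E1]] := A 0 (opt_H1 (wf_GE 0 n) erefl (star_g_like _ _)).
have Hm : #|` gV (bG (GE 0 n))| <= n.+1 by rewrite card_GE.
have [B _] := Hsh (H2 0 n) (wf_H2 0 n) erefl.
have [k2 [Hk2 E2]] := B _ (opt_H2 (wf_GE 0 n) erefl Hm).
have := ub_H2 wG' bG' Hk2.
move: Hsz E2; rewrite card_GE (@cardfs1 nat) -/n => Hsz E2 Hk.
clearbody n; move: Hsz Hk; move: #|` gV (bG G')| => a; move: #|` gE (bG G')| => b. lia.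
Qed.

Theorem mainTheorem12 :
  (forall f : nat -> nat, ~ exists K, bkernel (@vc_feasible nat) f K) /\
  (forall f : nat -> nat, ~ exists K, bkernel (@tds_feasible nat) f K) /\
  (forall x : nat,
     infinitely_many_classes [fset x]
       (fun G => edgeless (del (bG G) [fset x])) /\
     infinitely_many_classes [fset x]
       (fun G => is_tree (del (bG G) [fset x]))).
Proof.
split; [|split].
- move=> f [K HK]; apply: (kernel_contra (s := [fset 0]) _ HK) => n.
  split; first by rewrite /= fsub1set !inE eqxx.
  exact: star_edgeless.
- move=> f [K HK]; apply: (kernel_contra (s := fset0) _ HK) => n.
  split; first exact: fsub0set.
  apply: (star_tree (c := 0)); apply: star_del; [exact: star_g_like | by rewrite inE].
- move=> x; split.
  + exists (GE x); split.
      move=> i; split; [exact: wf_GE | split => //]; exact: star_edgeless.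
    move=> i j nij; apply: (ineq (wf_GE x i) (wf_GE x j) erefl erefl (star_g_like _ _) (star_g_like _ _)).
    by rewrite !card_GE => -[].
  + exists (GT x); split.
      move=> i; split; [exact: wf_GT | split => //].
      apply: (star_tree (c := x.+1)); apply: star_del; [exact: star_g_like | rewrite inE; apply/eqP; lia].
    move=> i j nij; apply: (ineq (wf_GT x i) (wf_GT x j) erefl erefl (star_g_like _ _) (star_g_like _ _)).
    by rewrite !card_GT => -[].
Qed.
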